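(* Let $J\subseteq I$ and let $A$ be a $J$-antichain in $R^+$. Then $A$ is an abelian $J$-antichain if and only if both of the following hold: (1) for all $\alpha,\beta\in A$ with $\alpha\ne\beta$ there exists $i\in I$ with $d_i(\alpha)+d_i(\beta)>d_i(\theta)$; (2) for every $\alpha\in A$ there exists $i\in I$ with $2d_i(\alpha)>d_i(\theta)$.
   Context: $\mathfrak g$ is a complex simple Lie algebra of rank $n$ with root system $R$, $I=\{1,\dots,n\}$, simple roots $\{\alpha_i\}_{i\in I}$, $Q^+$ their $\mathbb Z_{\ge0}$-span, $R^+=R\cap Q^+$, $\theta$ the highest root. For $\eta$ in the root lattice write $\eta=\sum_i d_i(\eta)\alpha_i$. Partial order: $\lambda\le\mu$ iff $\mu-\lambda\in Q^+$. For $J\subseteq I$, $R^+(J)=\{\alpha\in R^+: d_i(\alpha)=0\ \forall i\notin J\}$. A $J$-antichain is a subset $A\subseteq R^+$ with $A\cap R^+(J)=\emptyset$, distinct elements pairwise incomparable, and $\alpha-\alpha_j\notin R$ for all $\alpha\in A$, $j\in J$. $\Phi(A)=\{\alpha\in R^+:\alpha\ge\beta\text{ for some }\beta\in A\}$. A $J$-antichain $A$ is abelian if for all $\beta_1,\beta_2\in\Phi(A)$ (not necessarily distinct) $\beta_1+\beta_2\notin R$. *)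

(* Defs.v *)
From HB Require Import structures.
From mathcomp Require Import all_boot all_order all_algebra.
Set Implicit Arguments. Unset Strict Implicit. Unset Printing Implicit Defensive.
Import Order.TTheory GRing.Theory Num.Theory.
Local Open Scope ring_scope.

(* A (finite, reduced, irreducible, crystallographic) root system with a
   chosen base {alpha_1,...,alpha_n}, written in coordinates w.r.t. that base:
   a vector x : 'rV[F]_n stands for  sum_i x_i alpha_i,  so d_i(x) = x 0 i,
   the simple root alpha_i is the unit row vector 'e_i = delta_mx 0 i, and the
   W-invariant inner product is given by the Gram matrix B of the simple roots. *)

Definition dcoord (F : realFieldType) (n : nat) (x : 'rV[F]_n) (i : 'I_n) : F :=
  x 0 i.

Definition sroot (F : realFieldType) (n : nat) (i : 'I_n) : 'rV[F]_n :=
  delta_mx 0 i.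

Definition bform (F : realFieldType) (n : nat) (B : 'M[F]_n) (x y : 'rV[F]_n) : F :=
  (x *m B *m y^T) 0 0.

Definition is_intF (F : realFieldType) (x : F) : Prop := exists z : int, x = z%:~R.

Definition cartan_int (F : realFieldType) (n : nat) (B : 'M[F]_n) (a b : 'rV[F]_n) : F :=
  2 * bform B b a / bform B a a.

Definition reflect_root (F : realFieldType) (n : nat) (B : 'M[F]_n) (a b : 'rV[F]_n)
  : 'rV[F]_n := b - cartan_int B a b *: a.

Definition simple_root_system (F : realFieldType) (n : nat) (B : 'M[F]_n)
  (R : seq 'rV[F]_n) : Prop :=
  [/\ (0 < n)%N /\ B^T = B /\ (forall x : 'rV[F]_n, x != 0 -> 0 < bform B x x),
      (0 : 'rV[F]_n) \notin R /\
      (forall a b, a \in R -> b \in R -> reflect_root B a b \in R) /\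
      (forall a b, a \in R -> b \in R -> is_intF (cartan_int B a b)),
      (forall a (c : F), a \in R -> c *: a \in R -> c = 1 \/ c = -1),
      (* the simple roots form a base *)
      (forall i, sroot F i \in R) /\
      (forall a, a \in R -> (forall i, is_intF (dcoord a i)) /\
          ((forall i, 0 <= dcoord a i) \/ (forall i, dcoord a i <= 0))) &
      (* irreducible: no decomposition into two nonempty orthogonal parts *)
      (forall P : 'rV[F]_n -> Prop,
          (exists2 a, a \in R & P a) -> (exists2 a, a \in R & ~ P a) ->
          exists a b, [/\ a \in R, b \in R, P a, ~ P b & bform B a b != 0])].

Definition qle (F : realFieldType) (n : nat) (x y : 'rV[F]_n) : Prop :=
  forall i, exists k : nat, dcoord y i - dcoord x i = k%:R.

Definition pos_root (F : realFieldType) (n : nat) (R : seq 'rV[F]_n) (a : 'rV[F]_n) : Prop :=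
  a \in R /\ forall i, 0 <= dcoord a i.

Definition highest_root (F : realFieldType) (n : nat) (R : seq 'rV[F]_n) (t : 'rV[F]_n) : Prop :=
  t \in R /\ forall a, a \in R -> qle a t.

Definition in_posJ (F : realFieldType) (n : nat) (R : seq 'rV[F]_n) (J : {set 'I_n})
  (a : 'rV[F]_n) : Prop :=
  pos_root R a /\ forall i, i \notin J -> dcoord a i = 0.

Definition J_antichain (F : realFieldType) (n : nat) (R : seq 'rV[F]_n) (J : {set 'I_n})
  (A : seq 'rV[F]_n) : Prop :=
  [/\ (forall a, a \in A -> pos_root R a),
      (forall a, a \in A -> ~ in_posJ R J a),
      (forall a b, a \in A -> b \in A -> a != b -> ~ qle a b) &
      (forall a j, a \in A -> j \in J -> a - sroot F j \notin R)].

Definition upper_closure (F : realFieldType) (n : nat) (R : seq 'rV[F]_n)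
  (A : seq 'rV[F]_n) (a : 'rV[F]_n) : Prop :=
  pos_root R a /\ exists2 b, b \in A & qle b a.

Definition abelian_J_antichain (F : realFieldType) (n : nat) (R : seq 'rV[F]_n)
  (J : {set 'I_n}) (A : seq 'rV[F]_n) : Prop :=
  J_antichain R J A /\
  forall b1 b2, upper_closure R A b1 -> upper_closure R A b2 -> b1 + b2 \notin R.

(* Main.v *)
Require Import Defs.
From HB Require Import structures.
From mathcomp Require Import all_boot all_order all_algebra.
Import Order.TTheory GRing.Theory Num.Theory.
Local Open Scope ring_scope.
Set Implicit Arguments. Unset Strict Implicit.

Section Bform.
Variables (F : realFieldType) (n : nat) (B : 'M[F]_n).
Hypothesis symB : B^T = B.

Lemma bformDl x y z : bform B (x + y) z = bform B x z + bform B y z.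
Proof. by rewrite /bform !mulmxDl mxE. Qed.
Lemma bformDr x y z : bform B x (y + z) = bform B x y + bform B x z.
Proof. by rewrite /bform linearD /= mulmxDr mxE. Qed.
Lemma bformZl c x z : bform B (c *: x) z = c * bform B x z.
Proof. by rewrite /bform -!scalemxAl mxE. Qed.
Lemma bformZr c x z : bform B x (c *: z) = c * bform B x z.
Proof. by rewrite /bform linearZ /= -scalemxAr mxE. Qed.
Lemma bformNl x z : bform B (- x) z = - bform B x z.
Proof. by rewrite -scaleN1r bformZl mulN1r. Qed.
Lemma bformNr x z : bform B x (- z) = - bform B x z.
Proof. by rewrite -scaleN1r bformZr mulN1r. Qed.
Lemma bformBl x y z : bform B (x - y) z = bform B x z - bform B y z.
Proof. by rewrite bformDl bformNl. Qed.
Lemma bformBr x y z : bform B x (y - z) = bform B x y - bform B x z.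
Proof. by rewrite bformDr bformNr. Qed.
Lemma bform0r x : bform B x 0 = 0.
Proof. by rewrite /bform trmx0 mulmx0 mxE. Qed.
Lemma bformC x y : bform B x y = bform B y x.
Proof.
rewrite /bform -[in LHS](trmxK (x *m B *m y^T)) mxE.
by rewrite !trmx_mul trmxK symB mulmxA.
Qed.
Lemma bform_sumr x (I : finType) (f : I -> 'rV[F]_n) :
  bform B x (\sum_i f i) = \sum_i bform B x (f i).
Proof. by apply: (big_morph (bform B x) (bformDr x) (bform0r x)). Qed.

Hypothesis pd : forall x : 'rV[F]_n, x != 0 -> 0 < bform B x x.
Variable R : seq 'rV[F]_n.
Hypothesis R0 : (0 : 'rV[F]_n) \notin R.
Hypothesis red : forall a (c : F), a \in R -> c *: a \in R -> c = 1 \/ c = -1.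

Lemma cs_strict a b : a \in R -> b \in R -> a != b -> a != - b ->
  bform B a b ^+ 2 < bform B a a * bform B b b.
Proof.
move=> aR bR nab nanb.
have b0 : b != 0 by apply: contraNneq R0 => <-.
have bbp := pd b0.
set bb := bform B b b in bbp *.
set ab := bform B a b.
set aa := bform B a a.
set c := ab / bb.
have cbb : c * bb = ab by rewrite /c mulfVK // gt_eqF.
rewrite ltNge; apply/negP => H.
have xx : bform B (a - c *: b) (a - c *: b) = aa - c * ab.
  rewrite bformBl !bformBr !bformZl !bformZr -/aa -/ab -/bb (bformC b a) -/ab.
  by rewrite cbb subrr subr0.
have xx2 : (aa - c * ab) * bb = aa * bb - ab ^+ 2.
  by rewrite mulrBl -mulrA (mulrC ab) mulrA cbb expr2.
have x0 : a - c *: b = 0.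
  apply/eqP; apply: contraT => /pd; rewrite xx => hp.
  have : 0 < (aa - c * ab) * bb by apply: mulr_gt0.
  by rewrite xx2 subr_gt0 ltNge H.
have ea : a = c *: b by apply/eqP; rewrite -subr_eq0 x0.
have aR' : c *: b \in R by rewrite -ea.
have [c1|c1] := red bR aR'.
  by move: nab; rewrite ea c1 scale1r eqxx.
by move: nanb; rewrite ea c1 scaleN1r eqxx.
Qed.

Lemma zle2 (z : int) : z < 0 -> z != -1 -> z <= -2.
Proof. by case: z => [k|[|k]]. Qed.
Lemma zge1 (z : int) : 0 < z -> 1 <= z.
Proof. by case: z => [[|k]|k]. Qed.

Hypothesis refl : forall a b, a \in R -> b \in R -> reflect_root B a b \in R.
Hypothesis intc : forall a b, a \in R -> b \in R -> is_intF (cartan_int B a b).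

Lemma neg_root_sum a b : a \in R -> b \in R -> bform B a b < 0 -> a != - b ->
  a + b \in R.
Proof.
move=> aR bR hab nanb.
have nab : a != b.
  apply: contraTneq hab => ->; rewrite -leNgt ltW //; apply: pd.
  by apply: contraNneq R0 => <-.
have a0 : a != 0 by apply: contraNneq R0 => <-.
have b0 : b != 0 by apply: contraNneq R0 => <-.
have aap := pd a0; have bbp := pd b0.
have cs := cs_strict aR bR nab nanb.
set p := cartan_int B a b; set q := cartan_int B b a.
have pa : p * bform B a a = 2 * bform B a b.
  by rewrite /p /cartan_int (bformC b a) mulfVK // gt_eqF.
have qb : q * bform B b b = 2 * bform B a b.
  by rewrite /q /cartan_int mulfVK // gt_eqF.
have pn : p < 0.
  by rewrite /p /cartan_int (bformC b a) pmulr_llt0 ?invr_gt0 // pmulr_rlt0.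
have qn : q < 0.
  by rewrite /q /cartan_int pmulr_llt0 ?invr_gt0 // pmulr_rlt0.
have [zp ep] := intc aR bR; have [zq eq] := intc bR aR.
rewrite -/p in ep; rewrite -/q in eq.
have [zp1|zp1] := eqVneq zp (-1).
  have : reflect_root B a b \in R by apply: refl.
  by rewrite /reflect_root -/p ep zp1 intrN scaleN1r opprK addrC.
have [zq1|zq1] := eqVneq zq (-1).
  have : reflect_root B b a \in R by apply: refl.
  by rewrite /reflect_root -/q eq zq1 intrN scaleN1r opprK.
have zpn : zp < 0 by rewrite -(ltrz0 F) -ep.
have zqn : zq < 0 by rewrite -(ltrz0 F) -eq.
have p2 : p <= -2 by move: (zle2 zpn zp1); rewrite -(ler_int F) intrN -ep.
have q2 : q <= -2 by move: (zle2 zqn zq1); rewrite -(ler_int F) intrN -eq.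
have pq4 : 4 <= p * q.
  rewrite -mulrNN; have -> : (4 : F) = 2 * 2 by rewrite -natrM.
  by apply: ler_pM => //; rewrite lerNr.
have : 4 * (bform B a a * bform B b b) <= (p * q) * (bform B a a * bform B b b).
  by rewrite ler_pM2r ?mulr_gt0.
rewrite mulrACA pa qb mulrACA -expr2.
rewrite -expr2; have -> : (2 ^+ 2 : F) = 4 by rewrite expr2 -natrM.
by rewrite ler_pM2l ?ltr0n // leNgt cs.
Qed.
End Bform.

Section Coords.
Variables (F : realFieldType) (n : nat).
Implicit Types x y : 'rV[F]_n.
Lemma dcoordD x y i : dcoord (x + y) i = dcoord x i + dcoord y i.
Proof. by rewrite /dcoord mxE. Qed.
Lemma dcoordN x i : dcoord (- x) i = - dcoord x i.
Proof. by rewrite /dcoord mxE. Qed.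
Lemma dcoordB x y i : dcoord (x - y) i = dcoord x i - dcoord y i.
Proof. by rewrite dcoordD dcoordN. Qed.
Lemma dcoord_sroot (i j : 'I_n) : dcoord (sroot F i) j = (i == j)%:R.
Proof. by rewrite /dcoord /sroot mxE eqxx eq_sym. Qed.
Lemma qle_le x y i : qle x y -> dcoord x i <= dcoord y i.
Proof. by move=> /(_ i) [k hk]; rewrite -subr_ge0 hk ler0n. Qed.
Lemma qle_refl x : qle x x.
Proof. by move=> i; exists 0%N; rewrite subrr. Qed.
Lemma is_intF_nat (x : F) : is_intF x -> 0 <= x -> exists k : nat, x = k%:R.
Proof.
case=> z ->; rewrite ler0z; case: z => // k _; by exists k.
Qed.
Lemma is_intFB (x y : F) : is_intF x -> is_intF y -> is_intF (x - y).
Proof. by case=> z -> [w ->]; exists (z - w); rewrite intrB. Qed.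
End Coords.

Section Key.
Variables (F : realFieldType) (n : nat) (B : 'M[F]_n) (R : seq 'rV[F]_n) (theta : 'rV[F]_n).
Hypothesis symB : B^T = B.
Hypothesis pd : forall x : 'rV[F]_n, x != 0 -> 0 < bform B x x.
Hypothesis R0 : (0 : 'rV[F]_n) \notin R.
Hypothesis red : forall a (c : F), a \in R -> c *: a \in R -> c = 1 \/ c = -1.
Hypothesis refl : forall a b, a \in R -> b \in R -> reflect_root B a b \in R.
Hypothesis intc : forall a b, a \in R -> b \in R -> is_intF (cartan_int B a b).
Hypothesis sR : forall i, sroot F i \in R.
Hypothesis thR : theta \in R.

Lemma nz_R {x} : x \in R -> x != 0.
Proof. by move=> xR; apply: contraNneq R0 => <-. Qed.

Lemma theta_half {a} : a \in R -> 0 < bform B theta a ->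
  bform B theta theta <= 2 * bform B theta a.
Proof.
move=> aR h.
have thp := pd (nz_R thR).
have [z ez] := intc thR aR.
move: ez; rewrite /cartan_int => ez.
have zp : 0 < z.
  by rewrite -(ltr0z F) -ez (bformC symB a) divr_gt0 // mulr_gt0.
have : 1 <= (z%:~R : F) by rewrite ler1z zge1.
by rewrite -ez (bformC symB a) ler_pdivlMr // mul1r.
Qed.

Lemma dec_row (x : 'rV[F]_n) : x = \sum_i dcoord x i *: sroot F i.
Proof. exact: row_sum_delta. Qed.

Lemma form_nonneg a d :
  (forall i, 0 <= dcoord d i) ->
  (forall i, dcoord d i != 0 -> 0 <= bform B a (sroot F i)) ->
  0 <= bform B a d.
Proof.
move=> dpos h; rewrite [d]dec_row bform_sumr; apply: sumr_ge0 => i _.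
rewrite bformZr; have [->|nz] := eqVneq (dcoord d i) 0; first by rewrite mul0r.
by apply: mulr_ge0 => //; apply: h.
Qed.

Lemma pos_not_neg {a b} : pos_root R a -> pos_root R b -> a != - b.
Proof.
move=> [aR ap] [bR bp]; apply/eqP => eab.
have : a == 0.
  apply/eqP/rowP => j; apply/le_anti; rewrite mxE ap andbT.
  by rewrite eab mxE oppr_le0; apply: bp.
by rewrite (negPf (nz_R aR)).
Qed.

Lemma pos_form {a b} : pos_root R a -> pos_root R b -> a + b \notin R ->
  0 <= bform B a b.
Proof.
move=> pa pb nab; rewrite leNgt; apply/negP => h.
by move: nab; rewrite (neg_root_sum symB pd R0 red refl intc (proj1 pa) (proj1 pb) h (pos_not_neg pa pb)).
Qed.

Lemma key a b : pos_root R a -> pos_root R b -> qle (a + b) theta ->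
  a + b \notin R ->
  exists i, dcoord (theta - a - b) i != 0 /\
            (a + sroot F i \in R \/ b + sroot F i \in R).
Proof.
move=> pa pb hq nab.
set d := theta - a - b.
have dpos : forall i, 0 <= dcoord d i.
  by move=> i; rewrite /d -addrA -opprD dcoordB; case: (hq i) => k ->; rewrite ler0n.
case: (boolP [exists i, (dcoord d i != 0) && ((a + sroot F i \in R) || (b + sroot F i \in R))]).
  by case/existsP => i /andP [h1 /orP h2]; exists i.
move/existsPn => H; exfalso.
have hs : forall c, pos_root R c -> (forall i, dcoord d i != 0 -> c + sroot F i \notin R) ->
    0 <= bform B c d.
  move=> c pc hc; apply: form_nonneg => // i /hc hi.
  apply: pos_form => //; split => // j; rewrite dcoord_sroot ler0n //.
have ha : 0 <= bform B a d.
  apply: hs => // i di; move: (H i); rewrite di /=; by case: (a + _ \in R).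
have hb : 0 <= bform B b d.
  apply: hs => // i di; move: (H i); rewrite di /= orbC; by case: (b + _ \in R).
have hab := pos_form pa pb nab.
have hba : 0 <= bform B b a by rewrite (bformC symB) hab.
have eth : theta = a + b + d by rewrite [RHS]addrC /d -[theta - a - b]addrA -opprD subrK.
have ed : d = theta - a - b by [].
clearbody d.
have aap := pd (nz_R (proj1 pa)).
have bbp := pd (nz_R (proj1 pb)).
have e1 : bform B theta a = bform B a a + (bform B b a + bform B a d).
  by rewrite {1}eth !bformDl addrA (bformC symB d).
have e2 : bform B theta b = bform B b b + (bform B a b + bform B b d).
  by rewrite {1}eth !bformDl (bformC symB d) (addrC (bform B a b)) addrA.
have ta : 0 < bform B theta a.
  by rewrite e1; apply: (lt_le_trans aap); rewrite lerDl addr_ge0.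
have tb : 0 < bform B theta b.
  by rewrite e2; apply: (lt_le_trans bbp); rewrite lerDl addr_ge0.
have h1 := theta_half (proj1 pa) ta.
have h2 := theta_half (proj1 pb) tb.
have etd : bform B theta d = bform B theta theta - bform B theta a - bform B theta b.
  by rewrite {1}ed !bformBr.
have td : bform B theta d <= 0.
  have : 2 * bform B theta d <= 0.
    rewrite etd !mulrBr subr_le0 lerBlDr.
    have -> : 2 * bform B theta theta = bform B theta theta + bform B theta theta by rewrite mulr_natl mulr2n.
    exact: lerD.
  by rewrite pmulr_rle0.
have dd : bform B d d <= 0.
  have -> : bform B d d = bform B theta d - bform B a d - bform B b d.
    by rewrite {1}ed !bformBl.
  rewrite -addrA -opprD subr_le0; exact: (le_trans td (addr_ge0 ha hb)).
have d0 : d = 0 by apply/eqP; apply: contraT => /pd; rewrite ltNge dd.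
have e : a + b = theta by rewrite eth d0 addr0.
by rewrite e thR in nab.
Qed.

Lemma qleE (x y : 'rV[F]_n) : qle x y <-> forall j, exists k : nat, dcoord (y - x) j = k%:R.
Proof. by split => h j; case: (h j) => k hk; exists k; rewrite ?dcoordB // -dcoordB. Qed.

Lemma sum_sroot (i : 'I_n) : \sum_j dcoord (sroot F i) j = 1.
Proof.
rewrite (bigD1 i) //= dcoord_sroot eqxx big1 ?addr0 // => j nji.
by rewrite dcoord_sroot eq_sym (negPf nji).
Qed.

Lemma step (al a b : 'rV[F]_n) (i : 'I_n) : pos_root R a -> qle al a -> qle (a + b) theta ->
  dcoord (theta - a - b) i != 0 -> a + sroot F i \in R ->
  [/\ pos_root R (a + sroot F i), qle al (a + sroot F i),
      qle (a + sroot F i + b) theta &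
      \sum_j dcoord (theta - (a + sroot F i) - b) j =
      \sum_j dcoord (theta - a - b) j - 1].
Proof.
move=> [aR ap] qa qt di aeR.
have ee : theta - (a + sroot F i) - b = theta - a - b - sroot F i.
  by rewrite opprD addrA [LHS]addrAC.
have eq0 : forall c, theta - (c + b) = theta - c - b by move=> c; rewrite opprD addrA.
split.
- split => // j; rewrite dcoordD dcoord_sroot; exact: addr_ge0.
- move=> j; case: (qa j) => k hk; exists (k + (i == j))%N.
  by rewrite dcoordD dcoord_sroot addrAC hk natrD.
- apply/qleE => j; rewrite eq0 ee dcoordB dcoord_sroot.
  move/qleE: qt => /(_ j); rewrite eq0; case=> k hk.
  have [eij|nij] := eqVneq i j.
    subst j; move: di; rewrite hk pnatr_eq0 => k0.
    exists k.-1; rewrite -{1}(prednK (n:=k)) ?lt0n // mulrSr addrK.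
    by [].
  by exists k; rewrite hk subr0.
- by rewrite ee (eq_bigr (fun j => dcoord (theta - a - b) j - dcoord (sroot F i) j))
    ?sumrB ?sum_sroot // => j _; rewrite dcoordB.
Qed.

Lemma pair_ex (m : nat) : forall al be a b,
  pos_root R a -> pos_root R b -> qle al a -> qle be b -> qle (a + b) theta ->
  \sum_i dcoord (theta - a - b) i = m%:R ->
  exists b1 b2, [/\ pos_root R b1, pos_root R b2, qle al b1, qle be b2 & b1 + b2 \in R].
Proof.
elim: m => [|m IH] al be a b pa pb qa qb qt hs;
  (have [abR|nab] := boolP (a + b \in R); first by exists a, b);
  have [i [di hor]] := key pa pb qt nab;
  have dge : forall j, 0 <= dcoord (theta - a - b) j
    by move=> j; move/qleE: qt => /(_ j) [k]; rewrite opprD addrA => ->; rewrite ler0n.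
- have : dcoord (theta - a - b) i <= \sum_j dcoord (theta - a - b) j.
    by rewrite (bigD1 i) //= lerDl sumr_ge0.
  rewrite hs => hle; move: di; rewrite eq_le hle dge //.
- have eba : theta - b - a = theta - a - b by rewrite addrAC.
  case: hor => [aeR|beR].
    have [pa' qa' qt' hs'] := step pa qa qt di aeR.
    by apply: (IH al be (a + sroot F i) b) => //; rewrite hs' hs mulrSr addrK.
  have qt2 : qle (b + a) theta by rewrite addrC.
  have di2 : dcoord (theta - b - a) i != 0 by rewrite eba.
  have [pb' qb' qt' hs'] := step pb qb qt2 di2 beR.
  have [b1 [b2 [h1 h2 h3 h4 h5]]] : exists b1 b2, [/\ pos_root R b1, pos_root R b2, qle be b1, qle al b2 & b1 + b2 \in R].
    by apply: (IH be al (b + sroot F i) a) => //; rewrite hs' eba hs mulrSr addrK.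
  by exists b2, b1; split => //; rewrite addrC.
Qed.
End Key.


Unset Implicit Arguments. Set Strict Implicit.

Theorem proposition1p6 (F : realFieldType) (n : nat) (B : 'M[F]_n)
  (R : seq 'rV[F]_n) (theta : 'rV[F]_n) (J : {set 'I_n}) (A : seq 'rV[F]_n) :
  simple_root_system B R ->
  highest_root R theta ->
  J_antichain R J A ->
  (abelian_J_antichain R J A <->
   (forall a b, a \in A -> b \in A -> a != b ->
      exists i, dcoord theta i < dcoord a i + dcoord b i) /\
   (forall a, a \in A -> exists i, dcoord theta i < 2 * dcoord a i)).
Proof.
move=> hR [thR thmax] hJ.
case: hR => [[n0 [symB pd]] [R0 [refl intc]] red [sR coords] irr].
have hJ' := hJ; case: hJ' => [Apos _ _ _].
have H : forall a b, a \in A -> b \in A -> abelian_J_antichain R J A ->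
    (forall i, dcoord a i + dcoord b i <= dcoord theta i) -> False.
  move=> a b aA bA [_ hab] hle.
  have pa := Apos a aA; have pb := Apos b bA.
  have hk : forall j, exists k : nat, dcoord (theta - a - b) j = k%:R.
    move=> j; apply: is_intF_nat.
      rewrite !dcoordB; apply: is_intFB; first apply: is_intFB.
      - exact: (proj1 (coords _ thR)).
      - exact: (proj1 (coords _ (proj1 pa))).
      - exact: (proj1 (coords _ (proj1 pb))).
    by rewrite !dcoordB -addrA -opprD subr_ge0.
  have qt : qle (a + b) theta.
    move=> j; case: (hk j) => k hkj; exists k.
    by rewrite -dcoordB opprD addrA.
  have [f hf] := fin_all_exists hk.
  have hs : \sum_i dcoord (theta - a - b) i = (\sum_i f i)%:R.
    by rewrite natr_sum; apply: eq_bigr => i _; rewrite hf.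
  have [b1 [b2 [p1 p2 q1 q2 bR]]] :=
    pair_ex symB pd R0 red refl intc sR thR pa pb (qle_refl a) (qle_refl b) qt hs.
  have := hab b1 b2 (conj p1 (ex_intro2 _ _ a aA q1)) (conj p2 (ex_intro2 _ _ b bA q2)).
  by rewrite bR.
split.
- move=> hab; split.
  + move=> a b aA bA _.
    case: (boolP [exists i, dcoord theta i < dcoord a i + dcoord b i]) => [/existsP //|/existsPn hn].
    exfalso; apply: (H a b aA bA hab) => i; by rewrite leNgt hn.
  + move=> a aA.
    case: (boolP [exists i, dcoord theta i < 2 * dcoord a i]) => [/existsP //|/existsPn hn].
    exfalso; apply: (H a a aA aA hab) => i; by rewrite -mulr2n -mulr_natl leNgt hn.
- move=> [h1 h2]; split => // b1 b2 [pb1 [a aA qa]] [pb2 [b bA qb]]; apply/negP => bR.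
  have qt := thmax _ bR.
  have le1 : forall i, dcoord a i + dcoord b i <= dcoord theta i.
    move=> i; apply: le_trans (qle_le i qt); rewrite dcoordD.
    by apply: lerD; apply: qle_le.
  have [eab|nab] := eqVneq a b.
    subst b; case: (h2 a aA) => i hi.
    by move: (le1 i); rewrite leNgt -mulr2n -mulr_natl hi.
  case: (h1 a b aA bA nab) => i hi.
  by move: (le1 i); rewrite leNgt hi.
Qed.
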